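(* Let $A$ be a set of agents and let $x$ be an agent with $x \notin A$. Suppose $PC(A,\phi)$ holds and all agents are honest (they communicate only truths). Suppose further that for some agent $v_x \in A$ the following two communications take place: $v_x$ communicates to $x$ the fact $PC(A,\phi)$, and $v_x$ communicates to every member of $A$ the fact $K_x\,\phi$. Then $PC(A \cup \{x\},\phi)$ holds.
   Context: The setting is epistemic (temporal) logic over a set of agents. For an agent $x$ and predicate $\phi$, $K_x\,\phi$ means ''agent $x$ knows $\phi$''; only truths can be known (if $K_x\,\phi$ then $\phi$). Public certifiability of a fact $\phi$ among a set $A$ of agents is defined by $PC(A,\phi) :\iff \forall x,y \in A,\ K_x K_y\,\phi$. A communication ''$v \to B : \psi$'' means agent $v$ tells the fact $\psi$ to the agents in $B$; since agents are honest, a recipient of such a communication (with delivery assumed, i.e. liveness) comes to know $\psi$. *)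

(* Defs.v *)
(* Interpreted-systems semantics of knowledge (Fagin–Halpern–Moses–Vardi):
   facts are predicates on points; agent a knows phi at point w iff phi holds at every
   point a cannot distinguish from w (indistinguishability is an equivalence, i.e. S5). *)
From Stdlib Require Import RelationClasses.

Record System := {
  Agent : Type;
  Point : Type;
  indist : Agent -> Point -> Point -> Prop;
  indist_equiv : forall a, Equivalence (indist a);
  (* comm v B psi w : by point w, agent v has communicated fact psi to the agents in B *)
  comm : Agent -> (Agent -> Prop) -> (Point -> Prop) -> Point -> Prop
}.

Definition fact (S : System) := Point S -> Prop.

Definition K (S : System) (x : Agent S) (phi : fact S) : fact S :=
  fun w => forall w', indist S x w w' -> phi w'.

Definition PC (S : System) (A : Agent S -> Prop) (phi : fact S) : fact S :=
  fun w => forall x y, A x -> A y -> K S x (K S y phi) w.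

Definition Honest (S : System) : Prop :=
  forall v B psi w, comm S v B psi w -> psi w.

Definition Live (S : System) : Prop :=
  forall v B psi w b, comm S v B psi w -> B b -> K S b psi w.

Definition union1 {T : Type} (A : T -> Prop) (x : T) : T -> Prop :=
  fun a => A a \/ a = x.

Definition single {T : Type} (x : T) : T -> Prop := fun a => a = x.

(* Main.v *)
Require Import Defs.
From Stdlib Require Import RelationClasses.

Theorem lemma1 (S : System) (A : Agent S -> Prop) (x : Agent S) (phi : fact S)
    (w : Point S) :
  ~ A x ->
  PC S A phi w ->
  Honest S ->
  Live S ->
  (exists vx, A vx /\
     comm S vx (single x) (PC S A phi) w /\
     comm S vx A (K S x phi) w) ->
  PC S (union1 A x) phi w.
Proof.
  intros _ HPC HH HL [vx [Hv [H1 H2]]].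
  assert (KxPC : K S x (PC S A phi) w) by (eapply HL; [exact H1| reflexivity]).
  assert (Kxphi : K S x phi w) by (exact (HH _ _ _ _ H2)).
  intros a b [Ha|Ha] [Hb|Hb].
  - apply HPC; assumption.
  - subst b. exact (HL _ _ _ _ _ H2 Ha).
  - subst a. intros w1 h1 w2 h2.
    pose proof (KxPC w1 h1 b b Hb Hb) as P.
    apply (P w2 h2). pose proof (indist_equiv S b). reflexivity.
  - subst a b. intros w1 h1 w2 h2. apply Kxphi.
    pose proof (indist_equiv S x). etransitivity; eassumption.
Qed.
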